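(* Let $\beta>0$ and let $L:(0,\infty)\to(0,\infty)$ be slowly varying at $\infty$ with $n\mapsto L(e^n)$ ultimately monotonically increasing. For all sufficiently large $y$, let $n\ge2$ be the integer with $n-1+\frac{1}{2\beta}\log L(e^{2n-2})\le y<n+\frac{1}{2\beta}\log L(e^{2n})$, and define \[ g_1(y)=\begin{cases} n-1, & \text{if } n-1+\frac{1}{2\beta}\log L(e^{2n-2})\le y<n-1+\frac1{2\beta}\log L(e^{2n}),\\ y-\frac{1}{2\beta}\log L(e^{2n}), & \text{if } n-1+\frac1{2\beta}\log L(e^{2n})\le y<n+\frac1{2\beta}\log L(e^{2n}),\end{cases} \] and $\tilde g_1(y)=y-\frac{1}{2\beta}\log L(e^{2n-2})$. Then $\tilde g_1(y)-g_1(y)\to0$ as $y\to\infty$. *)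

(* Defs.v *)
From Stdlib Require Import Reals Lra.
Open Scope R_scope.

Definition slowly_varying (L : R -> R) : Prop :=
  (forall x, 0 < x -> 0 < L x) /\
  (forall lam, 0 < lam -> forall eps, 0 < eps ->
     exists M, forall x, M < x -> Rabs (L (lam * x) / L x - 1) < eps).

Definition ult_incr_exp (L : R -> R) : Prop :=
  exists N : nat, forall m k : nat, (N <= m)%nat -> (m <= k)%nat ->
    L (exp (INR m)) <= L (exp (INR k)).

Definition hL (beta : R) (L : R -> R) (t : R) : R := / (2 * beta) * ln (L (exp t)).

Definition n_cond (beta : R) (L : R -> R) (y : R) (n : nat) : Prop :=
  (2 <= n)%nat /\
  INR n - 1 + hL beta L (2 * INR n - 2) <= y /\
  y < INR n + hL beta L (2 * INR n).

Definition g1 (beta : R) (L : R -> R) (y : R) (n : nat) : R :=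
  if Rlt_dec y (INR n - 1 + hL beta L (2 * INR n))
  then INR n - 1
  else y - hL beta L (2 * INR n).

Definition g1t (beta : R) (L : R -> R) (y : R) (n : nat) : R :=
  y - hL beta L (2 * INR n - 2).

(* Main.v *)
Require Import Defs.
From Stdlib Require Import Reals Lra Lia.
Open Scope R_scope.

Definition uu (beta : R) (L : R -> R) (m : nat) : R := hL beta L (2 * INR m).

Lemma ln_le' x y : 0 < x -> x <= y -> ln x <= ln y.
Proof.
  intros hx hxy. destruct (Rle_lt_or_eq_dec _ _ hxy) as [h|h].
  - left; apply ln_increasing; auto.
  - rewrite h; lra.
Qed.

Lemma hL_shift beta L n : hL beta L (2 * INR (S n) - 2) = uu beta L n.
Proof. unfold uu; f_equal; rewrite S_INR; ring. Qed.

Lemma key beta L : 0 < beta -> slowly_varying L -> ult_incr_exp L ->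
  forall d, 0 < d -> exists N1 : nat, forall n, (N1 <= n)%nat ->
    0 <= uu beta L (S n) - uu beta L n < d.
Proof.
  intros hb [Lpos Lsv] [N Hinc] d hd.
  assert (he : 0 < exp (2*beta*d) - 1).
  { assert (1 + 2*beta*d < exp (2*beta*d)) by (apply exp_ineq1; nra). nra. }
  destruct (Lsv (exp 2) (exp_pos 2) _ he) as [M HM].
  destruct (INR_unbounded M) as [K HK].
  exists (Nat.max N K). intros n hn.
  assert (hinv : 0 < / (2*beta)) by (apply Rinv_0_lt_compat; lra).
  set (x := exp (2 * INR n)).
  assert (hx : 0 < x) by apply exp_pos.
  assert (hx' : exp (2 * INR (S n)) = exp 2 * x).
  { unfold x; rewrite <- exp_plus; f_equal; rewrite S_INR; ring. }
  assert (hLx : 0 < L x) by auto.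
  assert (hLx' : 0 < L (exp 2 * x)) by (apply Lpos; apply Rmult_lt_0_compat; auto; apply exp_pos).
  unfold uu, hL. rewrite hx'. fold x.
  split.
  - assert (Hm := Hinc (2*n)%nat (2*(S n))%nat ltac:(lia) ltac:(lia)).
    rewrite !mult_INR in Hm. simpl (INR 2) in Hm.
    replace ((1+1) * INR n) with (2 * INR n) in Hm by ring.
    replace ((1+1) * INR (S n)) with (2 * INR (S n)) in Hm by ring.
    rewrite hx' in Hm. fold x in Hm.
    assert (ln (L x) <= ln (L (exp 2 * x))) by (apply ln_le'; auto).
    rewrite <- Rmult_minus_distr_l. apply Rmult_le_pos; lra.
  - assert (hKn : INR K <= INR n) by (apply le_INR; lia).
    assert (hn0 : 0 <= INR n) by apply pos_INR.
    assert (1 + 2 * INR n <= x) by apply exp_ineq1_le.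
    assert (hM : M < x) by lra.
    specialize (HM x hM).
    assert (hr : L (exp 2 * x) / L x < exp (2*beta*d)).
    { apply Rabs_def2 in HM. lra. }
    assert (hr' : L (exp 2 * x) < exp (2*beta*d) * L x).
    { apply (Rmult_lt_compat_r (L x)) in hr; auto.
      unfold Rdiv in hr. rewrite Rmult_assoc, Rinv_l in hr; lra. }
    assert (hl : ln (L (exp 2 * x)) < ln (exp (2*beta*d) * L x)) by (apply ln_increasing; auto).
    rewrite ln_mult, ln_exp in hl; [|apply exp_pos|auto].
    rewrite <- Rmult_minus_distr_l.
    apply Rmult_lt_compat_l with (r := / (2*beta)) in hl.
    2: auto.
    replace (/ (2 * beta) * (2 * beta * d + ln (L x))) with (d + / (2*beta) * ln (L x)) in hl by (field; lra).
    lra.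
Qed.

Definition aa beta L (n : nat) : R := INR n - 1 + hL beta L (2 * INR n - 2).
Definition bb beta L (n : nat) : R := INR n + uu beta L n.

Fixpoint mb beta L (K : nat) : R :=
  match K with 0%nat => bb beta L 0 | S k => Rmax (mb beta L k) (bb beta L (S k)) end.

Lemma mb_ge beta L K k : (k <= K)%nat -> bb beta L k <= mb beta L K.
Proof.
  induction K; intros h.
  - assert (k = 0%nat) by lia; subst; simpl; lra.
  - simpl. destruct (Nat.eq_dec k (S K)) as [->|hne].
    + apply Rmax_r.
    + eapply Rle_trans; [apply IHK; lia| apply Rmax_l].
Qed.

Lemma aS beta L n : aa beta L (S n) = bb beta L n.
Proof. unfold aa, bb. rewrite hL_shift, S_INR. ring. Qed.

Theorem lemmaA1 (beta : R) (L : R -> R) :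
  0 < beta -> slowly_varying L -> ult_incr_exp L ->
  forall eps, 0 < eps ->
  exists Y, forall y, Y < y ->
    (exists! n : nat, n_cond beta L y n) /\
    (forall n : nat, n_cond beta L y n ->
       Rabs (g1t beta L y n - g1 beta L y n) < eps).
Proof.
  intros hb hsv hinc eps heps.
  destruct (key beta L hb hsv hinc eps heps) as [N1 HN1].
  set (N0 := S (Nat.max N1 1)).
  assert (Hstep : forall n, (N0 <= n)%nat ->
     0 <= uu beta L n - hL beta L (2 * INR n - 2) < eps).
  { intros n hn. destruct n as [|m]; [lia|]. rewrite hL_shift. apply HN1. lia. }
  assert (Hab : forall n, (N0 <= n)%nat -> aa beta L n + 1 <= bb beta L n).
  { intros n hn. specialize (Hstep n hn). unfold aa, bb. lra. }
  assert (Hmono : forall k n, (N0 <= n)%nat -> aa beta L n + INR k <= aa beta L (n + k)).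
  { induction k; intros n hn.
    - rewrite Nat.add_0_r. simpl. lra.
    - rewrite Nat.add_succ_r, aS, S_INR.
      specialize (IHk n hn). specialize (Hab (n+k)%nat ltac:(lia)). lra. }
  assert (Hmono' : forall n m, (N0 <= n)%nat -> (n <= m)%nat -> aa beta L n <= aa beta L m).
  { intros n m hn hm. replace m with (n + (m - n))%nat by lia.
    specialize (Hmono (m-n)%nat n hn). pose proof (pos_INR (m-n)). lra. }
  exists (Rmax (mb beta L N0) (aa beta L N0)).
  intros y hy.
  assert (hy1 : mb beta L N0 < y) by (eapply Rle_lt_trans; [apply Rmax_l|exact hy]).
  assert (hy2 : aa beta L N0 < y) by (eapply Rle_lt_trans; [apply Rmax_r|exact hy]).
  assert (Hbig : forall n, n_cond beta L y n -> (N0 < n)%nat).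
  { intros n [h2 [h3 h4]]. destruct (Nat.lt_ge_cases N0 n) as [h|h]; auto.
    exfalso. pose proof (mb_ge beta L N0 n h). unfold bb, uu in H. lra. }
  split.
  -
    assert (Hex : forall k, (exists n, n_cond beta L y n) \/ aa beta L (N0 + k) <= y).
    { induction k.
      - right. rewrite Nat.add_0_r. lra.
      - destruct IHk as [IH|IH]; [left; exact IH|].
        destruct (Rlt_le_dec y (bb beta L (N0 + k))) as [h|h].
        + left. exists (N0 + k)%nat. unfold n_cond. split; [lia|].
          unfold aa, bb, uu in *. split; lra.
        + right. rewrite Nat.add_succ_r, aS. exact h. }
    destruct (INR_unbounded (y - aa beta L N0)) as [k hk].
    destruct (Hex k) as [[n hn]|h].
    + exists n. split; auto.
      intros m hm. pose proof (Hbig n hn) as hbn. pose proof (Hbig m hm) as hbm.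
      destruct hn as [_ [hn1 hn2]]. destruct hm as [_ [hm1 hm2]].
      destruct (Nat.lt_total n m) as [h|[h|h]]; auto; exfalso.
      * pose proof (Hmono' (S n) m ltac:(lia) h). rewrite aS in H.
        unfold aa, bb, uu in *. lra.
      * pose proof (Hmono' (S m) n ltac:(lia) h). rewrite aS in H.
        unfold aa, bb, uu in *. lra.
    + exfalso. pose proof (Hmono k N0 (le_n _)). lra.
  - intros n hn. pose proof (Hbig n hn) as hbn.
    specialize (Hstep n ltac:(lia)).
    destruct hn as [_ [h1 h2]].
    unfold g1t, g1, uu in *.
    destruct (Rlt_dec y (INR n - 1 + hL beta L (2 * INR n))) as [h|h];
      apply Rabs_def1; lra.
Qed.
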